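(* For each order function $h$ there exists an order function $g$ such that every $\mathrm{DNR}_g$ function computes (is Turing-reducible to... i.e., Turing-computes) an $\mathrm{SNPR}_h$ function. That is, for every $f\in\mathrm{DNR}_g$ there is $j\le_T f$ with $j\in\mathrm{SNPR}_h$.
   Context: $\varphi_e$ denotes the $e$-th partial recursive function. A function $f:\omega\to\omega$ is DNR (diagonally non-recursive) if $f(e)\neq\varphi_e(e)$ for every $e$ such that $\varphi_e(e)$ is defined. A function $f:\omega\to\omega$ is strongly non-partial-recursive (SNPR) if for every partial recursive function $\psi$, for all but finitely many $n$, if $\psi(n)$ is defined then $f(n)\neq\psi(n)$. An order function is a recursive, nondecreasing, unbounded function $h:\omega\to\omega$ with $h(0)\ge 2$. For a class $\mathrm{C}$ of functions $\omega\to\omega$ and an order function $h$, $\mathrm{C}_h$ denotes the subclass of members of $\mathrm{C}$ bounded by $h$ (i.e., $f(n)<h(n)$ for all $n$). *)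

(* Defs.v *)
From Stdlib Require Import Arith Cantor.

Definition pair (x y : nat) : nat := Cantor.to_nat (x, y).
Definition unpair (n : nat) : nat * nat := Cantor.of_nat n.

(* Syntax of unary partial recursive functionals (with one oracle call
   primitive), in the standard pairing-based basis. *)
Inductive code : Type :=
| CZero : code
| CSucc : code
| CFst : code
| CSnd : code
| COrac : code
| CComp : code -> code -> code (* CComp f g = f o g *)
| CPair : code -> code -> code
| CRec : code -> code -> code  (* primitive recursion on the second component *)
| CMu : code -> code.

Inductive eval (o : nat -> nat) : code -> nat -> nat -> Prop :=
| ev_zero x : eval o CZero x 0
| ev_succ x : eval o CSucc x (S x)
| ev_fst x : eval o CFst x (fst (unpair x))
| ev_snd x : eval o CSnd x (snd (unpair x))
| ev_orac x : eval o COrac x (o x)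
| ev_comp f g x y z : eval o g x y -> eval o f y z -> eval o (CComp f g) x z
| ev_pair f g x a b : eval o f x a -> eval o g x b -> eval o (CPair f g) x (pair a b)
| ev_rec0 f g x a : eval o f x a -> eval o (CRec f g) (pair x 0) a
| ev_recS f g x n a b :
    eval o (CRec f g) (pair x n) a ->
    eval o g (pair x (pair n a)) b ->
    eval o (CRec f g) (pair x (S n)) b
| ev_mu f x n :
    eval o f (pair x n) 0 ->
    (forall m, m < n -> exists v, v <> 0 /\ eval o f (pair x m) v) ->
    eval o (CMu f) x n.

(* Goedel numbering: a computable surjection nat -> code.  The fuel argument
   only ensures structural termination (fuel n suffices for decoding n). *)
Fixpoint decode_fuel (fuel n : nat) : code :=
  match fuel with
  | 0 => CZero
  | S k =>
    let r := n / 9 in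
    let p := unpair r in
    match n mod 9 with
    | 0 => CZero
    | 1 => CSucc
    | 2 => CFst
    | 3 => CSnd
    | 4 => COrac
    | 5 => CComp (decode_fuel k (fst p)) (decode_fuel k (snd p))
    | 6 => CPair (decode_fuel k (fst p)) (decode_fuel k (snd p))
    | 7 => CRec (decode_fuel k (fst p)) (decode_fuel k (snd p))
    | _ => CMu (decode_fuel k r)
    end
  end.

Definition decode (e : nat) : code := decode_fuel (S e) e.

(* The empty oracle (partial recursive = computable without oracle). *)
Definition no_oracle : nat -> nat := fun _ => 0.

Definition phi (e n v : nat) : Prop := eval no_oracle (decode e) n v.

(* A partial function psi : nat -> nat given by its graph; partial recursive
   iff it is some phi_e. *)
Definition partial_recursive (psi : nat -> nat -> Prop) : Prop :=
  exists e, forall n v, psi n v <-> phi e n v.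

Definition recursive (h : nat -> nat) : Prop :=
  exists e, forall n, phi e n (h n).

Definition turing_reducible (j f : nat -> nat) : Prop :=
  exists p : code, forall n, eval f p n (j n).

Definition order_function (h : nat -> nat) : Prop :=
  recursive h /\
  (forall m n, m <= n -> h m <= h n) /\
  (forall b, exists n, b <= h n) /\
  2 <= h 0.

Definition DNR (f : nat -> nat) : Prop :=
  forall e v, phi e e v -> f e <> v.

Definition SNPR (f : nat -> nat) : Prop :=
  forall psi : nat -> nat -> Prop, partial_recursive psi ->
    exists N, forall n v, N <= n -> psi n v -> f n <> v.

Definition bounded_by (h f : nat -> nat) : Prop := forall n, f n < h n.

(* Main.v *)
Require Import Defs.
From Stdlib Require Import Arith Cantor Lia List.

Definition p1 x := fst (unpair x).
Definition p2 x := snd (unpair x).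

Lemma unpair_pair a b : unpair (pair a b) = (a, b).
Proof. unfold unpair, pair. apply cancel_of_to. Qed.
Lemma p1_pair a b : p1 (pair a b) = a.
Proof. unfold p1. now rewrite unpair_pair. Qed.
Lemma p2_pair a b : p2 (pair a b) = b.
Proof. unfold p2. now rewrite unpair_pair. Qed.
Lemma pair_surj x : exists a b, x = pair a b.
Proof.
  exists (p1 x), (p2 x). unfold p1, p2, pair, unpair.
  rewrite <- surjective_pairing. now rewrite cancel_to_of.
Qed.

Lemma nat_rec_ext (c : nat) (G G' : nat -> nat -> nat) n :
  (forall k a, G k a = G' k a) -> nat_rec (fun _ => nat) c G n = nat_rec (fun _ => nat) c G' n.
Proof. intro E. induction n; simpl; auto. now rewrite IHn, E. Qed.
Ltac recext G := rewrite (nat_rec_ext _ _ G); [| intros ?k ?a; rewrite ?p1_pair, ?p2_pair, ?p1_pair, ?p2_pair, ?p1_pair, ?p2_pair; reflexivity].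

Definition cmp o p F := forall x, eval o p x (F x).

Lemma ev_eq o p x y y' : eval o p x y -> y = y' -> eval o p x y'.
Proof. intros H ->; exact H. Qed.

Lemma c_ext o p F G : cmp o p F -> (forall x, F x = G x) -> cmp o p G.
Proof. intros H E x. rewrite <- E. apply H. Qed.

Lemma c_zero o : cmp o CZero (fun _ => 0).
Proof. intro; constructor. Qed.
Lemma c_succ o : cmp o CSucc S.
Proof. intro; constructor. Qed.
Lemma c_fst o : cmp o CFst p1.
Proof. intro; constructor. Qed.
Lemma c_snd o : cmp o CSnd p2.
Proof. intro; constructor. Qed.
Lemma c_orac o : cmp o COrac o.
Proof. intro; constructor. Qed.
Lemma c_comp o p q F G : cmp o p F -> cmp o q G -> cmp o (CComp p q) (fun x => F (G x)).
Proof. intros Hp Hq x. econstructor; eauto. Qed.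
Lemma c_pair o p q F G : cmp o p F -> cmp o q G -> cmp o (CPair p q) (fun x => pair (F x) (G x)).
Proof. intros Hp Hq x. constructor; eauto. Qed.
Lemma c_rec o p q F G : cmp o p F -> cmp o q G -> forall x n,
  eval o (CRec p q) (pair x n) (nat_rec (fun _ => nat) (F x) (fun k a => G (pair x (pair k a))) n).
Proof.
  intros Hp Hq x n. induction n; simpl.
  - constructor. apply Hp.
  - eapply ev_recS. apply IHn. apply Hq.
Qed.
Lemma c_mu o p F x n : cmp o p F -> F (pair x n) = 0 -> (forall m, m < n -> F (pair x m) <> 0) ->
  eval o (CMu p) x n.
Proof.
  intros Hp H0 Hm. constructor.
  - rewrite <- H0. apply Hp.
  - intros m Hlt. exists (F (pair x m)). split; auto.
Qed.
Lemma c_app2 o P f A B FA FB : cmp o P (fun x => f (p1 x) (p2 x)) -> cmp o A FA -> cmp o B FB ->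
  cmp o (CComp P (CPair A B)) (fun x => f (FA x) (FB x)).
Proof.
  intros HP HA HB. eapply c_ext. apply c_comp. apply HP. apply c_pair; eauto.
  intro x; simpl. now rewrite p1_pair, p2_pair.
Qed.

Definition ID := CPair CFst CSnd.
Lemma c_id o : cmp o ID (fun x => x).
Proof.
  eapply c_ext. apply c_pair; [apply c_fst|apply c_snd].
  intro x. destruct (pair_surj x) as [a [b ->]]. now rewrite p1_pair, p2_pair.
Qed.

Fixpoint K n := match n with 0 => CZero | S n => CComp CSucc (K n) end.
Lemma c_K o n : cmp o (K n) (fun _ => n).
Proof.
  induction n; simpl. apply c_zero. eapply c_ext. apply c_comp. apply c_succ. apply IHn. reflexivity.
Qed.

Lemma c_bin o p f (H : forall a b, eval o p (pair a b) (f a b)) : cmp o p (fun x => f (p1 x) (p2 x)).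
Proof. intro x. destruct (pair_surj x) as [a [b ->]]. rewrite p1_pair, p2_pair. apply H. Qed.

Definition SS := CComp CSnd CSnd.
Definition FSd := CComp CFst CSnd.
Lemma c_SS o : cmp o SS (fun x => p2 (p2 x)).
Proof. apply c_comp; [apply c_snd|apply c_snd]. Qed.
Lemma c_FSd o : cmp o FSd (fun x => p1 (p2 x)).
Proof. apply c_comp; [apply c_fst|apply c_snd]. Qed.

Definition ADD := CRec ID (CComp CSucc SS).
Lemma c_add o : cmp o ADD (fun x => p1 x + p2 x).
Proof.
  apply (c_bin o ADD (fun a b => a + b)). intros a b.
  eapply ev_eq. apply c_rec. apply c_id. apply c_comp. apply c_succ. apply c_SS.
  induction b; simpl; auto. rewrite !p2_pair. lia.
Qed.

Definition MUL := CRec CZero (CComp ADD (CPair SS CFst)).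
Lemma c_mul o : cmp o MUL (fun x => p1 x * p2 x).
Proof.
  apply (c_bin o MUL (fun a b => a * b)). intros a b.
  eapply ev_eq. apply c_rec. apply c_zero. apply c_app2. apply c_add. apply c_SS. apply c_fst.
  induction b; simpl; auto. rewrite !p2_pair, p1_pair. lia.
Qed.

Definition PRED := CComp (CRec CZero FSd) (CPair CZero ID).
Lemma c_pred o : cmp o PRED pred.
Proof.
  intro x. eapply ev_comp. apply c_pair. apply c_zero. apply c_id.
  eapply ev_eq. apply c_rec. apply c_zero. apply c_FSd.
  destruct x; simpl; auto. rewrite p2_pair, p1_pair. auto.
Qed.

Definition SUB := CRec ID (CComp PRED SS).
Lemma c_sub o : cmp o SUB (fun x => p1 x - p2 x).
Proof.
  apply (c_bin o SUB (fun a b => a - b)). intros a b.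
  eapply ev_eq. apply c_rec. apply c_id. apply c_comp. apply c_pred. apply c_SS.
  induction b; simpl. lia. rewrite !p2_pair. rewrite IHb. lia.
Qed.

Definition tri s := nat_rec (fun _ => nat) 0 (fun i m => S i + m) s.
Definition TRI := CComp (CRec CZero (CComp ADD (CPair (CComp CSucc FSd) SS))) (CPair CZero ID).
Lemma c_tri o : cmp o TRI tri.
Proof.
  intro x. eapply ev_comp. apply c_pair. apply c_zero. apply c_id.
  eapply ev_eq. apply c_rec. apply c_zero. apply c_app2. apply c_add.
  apply c_comp. apply c_succ. apply c_FSd. apply c_SS.
  recext (fun i m => S i + m). reflexivity.
Qed.

Lemma pair_eq a b : pair a b = b + tri (b + a).
Proof. reflexivity. Qed.

Definition PAIRC := CComp ADD (CPair CSnd (CComp TRI (CComp ADD (CPair CSnd CFst)))).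
Lemma c_pairc o : cmp o PAIRC (fun x => pair (p1 x) (p2 x)).
Proof.
  eapply c_ext. apply c_app2. apply c_add. apply c_snd. apply c_comp. apply c_tri.
  apply c_app2. apply c_add. apply c_snd. apply c_fst.
  intro x. rewrite pair_eq. reflexivity.
Qed.

Definition body (rec : nat -> code) (n : nat) : code :=
    let r := n / 9 in
    let p := unpair r in
    match n mod 9 with
    | 0 => CZero
    | 1 => CSucc
    | 2 => CFst
    | 3 => CSnd
    | 4 => COrac
    | 5 => CComp (rec (fst p)) (rec (snd p))
    | 6 => CPair (rec (fst p)) (rec (snd p))
    | 7 => CRec (rec (fst p)) (rec (snd p))
    | _ => CMu (rec r)
    end.

Lemma df_body k n : decode_fuel (S k) n = body (decode_fuel k) n.
Proof. reflexivity. Qed.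

Lemma p12_le r : p1 r <= r /\ p2 r <= r.
Proof.
  destruct (pair_surj r) as [a [b ->]]. rewrite p1_pair, p2_pair.
  pose proof (to_nat_non_decreasing a b). unfold pair. lia.
Qed.

Lemma body_ext f1 f2 n : 0 < n -> (forall m, m < n -> f1 m = f2 m) -> body f1 n = body f2 n.
Proof.
  intros Hn E. unfold body.
  assert (Hr : n / 9 < n) by (apply Nat.div_lt; lia).
  pose proof (p12_le (n/9)) as [H1 H2]. unfold p1, p2 in *.
  rewrite (E (fst (unpair (n/9)))) by lia.
  rewrite (E (snd (unpair (n/9)))) by lia.
  rewrite (E (n/9)) by lia. reflexivity.
Qed.

Lemma fuel_ok : forall n k, n < k -> decode_fuel k n = decode n.
Proof.
  induction n as [n IH] using lt_wf_ind. intros k Hk.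
  destruct k as [|k]; [lia|]. unfold decode. rewrite !df_body.
  destruct n as [|n']. reflexivity.
  apply body_ext; [lia|]. intros m Hm.
  rewrite (IH m Hm k) by lia. rewrite (IH m Hm (S n')) by lia. reflexivity.
Qed.

Lemma decode_body n : 0 < n -> decode n = body decode n.
Proof.
  intro Hn. unfold decode at 1. rewrite df_body. apply body_ext; auto.
  intros m Hm. apply fuel_ok. lia.
Qed.

Lemma divmod9 q r : r < 9 -> (9 * q + r) / 9 = q /\ (9 * q + r) mod 9 = r.
Proof.
  intro Hr. split.
  - symmetry. apply (Nat.div_unique _ _ _ r); lia.
  - symmetry. apply (Nat.mod_unique _ _ q); lia.
Qed.

Definition cidx x y := 9 * pair x y + 5.

Lemma decode_cidx x y : decode (cidx x y) = CComp (decode x) (decode y).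
Proof.
  unfold cidx. rewrite decode_body by lia. unfold body.
  destruct (divmod9 (pair x y) 5) as [E1 E2]; [lia|]. rewrite E1, E2.
  cbv beta iota zeta. rewrite unpair_pair. reflexivity.
Qed.

Fixpoint enc (c : code) : nat :=
  match c with
  | CZero => 0 | CSucc => 1 | CFst => 2 | CSnd => 3 | COrac => 4
  | CComp a b => 9 * pair (enc a) (enc b) + 5
  | CPair a b => 9 * pair (enc a) (enc b) + 6
  | CRec a b => 9 * pair (enc a) (enc b) + 7
  | CMu a => 9 * enc a + 8
  end.

Lemma decode9 q r : 0 < r < 9 -> decode (9 * q + r) =
  match r with
    | 0 => CZero
    | 1 => CSucc
    | 2 => CFst
    | 3 => CSnd
    | 4 => COrac
    | 5 => CComp (decode (p1 q)) (decode (p2 q))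
    | 6 => CPair (decode (p1 q)) (decode (p2 q))
    | 7 => CRec (decode (p1 q)) (decode (p2 q))
    | _ => CMu (decode q)
    end.
Proof.
  intro Hr. rewrite decode_body by lia. unfold body.
  destruct (divmod9 q r) as [E1 E2]; [lia|]. rewrite E1, E2. reflexivity.
Qed.

Lemma decode_enc c : decode (enc c) = c.
Proof.
  induction c; try reflexivity.
  - change (enc (CComp c1 c2)) with (9 * pair (enc c1) (enc c2) + 5).
    rewrite decode9 by lia. rewrite p1_pair, p2_pair. congruence.
  - change (enc (CPair c1 c2)) with (9 * pair (enc c1) (enc c2) + 6).
    rewrite decode9 by lia. rewrite p1_pair, p2_pair. congruence.
  - change (enc (CRec c1 c2)) with (9 * pair (enc c1) (enc c2) + 7).
    rewrite decode9 by lia. rewrite p1_pair, p2_pair. congruence.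
  - change (enc (CMu c)) with (9 * enc c + 8).
    rewrite decode9 by lia. congruence.
Qed.

Fixpoint strip (c : code) : code :=
  match c with
  | COrac => CZero
  | CComp a b => CComp (strip a) (strip b)
  | CPair a b => CPair (strip a) (strip b)
  | CRec a b => CRec (strip a) (strip b)
  | CMu a => CMu (strip a)
  | c => c
  end.

Fixpoint strip_ok c x y (H : eval no_oracle c x y) o {struct H} : eval o (strip c) x y.
Proof.
  destruct H; simpl.
  all: try solve [constructor | unfold no_oracle; constructor
     | econstructor; apply strip_ok; eassumption
     | econstructor; [apply strip_ok; eassumption | apply strip_ok; eassumption] ].
  eapply ev_recS; [exact (strip_ok _ _ _ H o) | exact (strip_ok _ _ _ H0 o)].
  constructor. apply strip_ok; assumption.
  intros m Hm. destruct (H0 m Hm) as [v [Hv Hev]]. exists v. split; [exact Hv|]. apply strip_ok; exact Hev.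
Qed.

Fixpoint tup (l : list nat) : nat := match l with nil => 0 | a :: l => pair a (tup l) end.
Fixpoint FS p := match p with 0 => CFst | S p => CComp (FS p) CSnd end.

Lemma FS_ok o p : forall l, p < length l -> eval o (FS p) (tup l) (nth p l 0).
Proof.
  induction p; intros [|a l] Hl; simpl in *; try lia.
  - eapply ev_eq. constructor. unfold unpair. rewrite unpair_pair; reflexivity.
  - eapply ev_comp. eapply ev_eq. apply ev_snd. apply p2_pair. apply IHp. lia.
Qed.

Fixpoint Q p := match p with 0 => 2 | S p => cidx (Q p) 3 end.
Fixpoint Cn n := match n with 0 => 0 | S n => cidx 1 (Cn n) end.
Definition idx i n p := cidx (Q p) (cidx i (Cn n)).

Lemma decode_Q p : decode (Q p) = FS p.
Proof. induction p; simpl. reflexivity. rewrite decode_cidx, IHp. reflexivity. Qed.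
Lemma decode_C n : decode (Cn n) = K n.
Proof. induction n; simpl. reflexivity. rewrite decode_cidx, IHn. reflexivity. Qed.

Lemma idx_phi i n l p : phi i n (tup l) -> p < length l -> phi (idx i n p) (idx i n p) (nth p l 0).
Proof.
  intros H Hp. unfold phi, idx. rewrite !decode_cidx, decode_Q, decode_C.
  eapply ev_comp; [|apply FS_ok; auto].
  eapply ev_comp; [apply c_K|]. exact H.
Qed.

Lemma tri_S s : tri (S s) = S s + tri s.
Proof. reflexivity. Qed.
Lemma tri_mono a b : a <= b -> tri a <= tri b.
Proof. induction 1; auto. rewrite tri_S. lia. Qed.
Lemma pair_mono a b a' b' : a <= a' -> b <= b' -> pair a b <= pair a' b'.
Proof. intros. rewrite !pair_eq. pose proof (tri_mono (b + a) (b' + a')). lia. Qed.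
Lemma pair_lt1 a a' b : a < a' -> pair a b < pair a' b.
Proof.
  intros. rewrite !pair_eq. pose proof (tri_mono (S (b + a)) (b + a')).
  rewrite tri_S in H0. lia.
Qed.
Lemma pair_ge a b : a + b <= pair a b.
Proof. pose proof (to_nat_non_decreasing a b). unfold pair. lia. Qed.
Lemma cidx_mono a b a' b' : a <= a' -> b <= b' -> cidx a b <= cidx a' b'.
Proof. intros. unfold cidx. pose proof (pair_mono a b a' b'). lia. Qed.
Lemma cidx_ge a b : a + b <= cidx a b.
Proof. unfold cidx. pose proof (pair_ge a b). lia. Qed.
Lemma Q_mono p p' : p <= p' -> Q p <= Q p'.
Proof. induction 1; auto. simpl. pose proof (cidx_ge (Q m) 3). lia. Qed.
Lemma C_mono n n' : n <= n' -> Cn n <= Cn n'.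
Proof. induction 1; auto. simpl. pose proof (cidx_ge 1 (Cn m)). lia. Qed.
Lemma idx_mono i n p i' n' p' : i <= i' -> n <= n' -> p <= p' -> idx i n p <= idx i' n' p'.
Proof.
  intros. unfold idx. apply cidx_mono. apply Q_mono; auto. apply cidx_mono; auto. apply C_mono; auto.
Qed.
Lemma idx_ge n : n <= idx n n n.
Proof. unfold idx. pose proof (cidx_ge (Q n) (cidx n (Cn n))). pose proof (cidx_ge n (Cn n)). lia. Qed.

Definition CIDX := CComp ADD (CPair (CComp MUL (CPair (K 9) PAIRC)) (K 5)).
Lemma c_cidx o : cmp o CIDX (fun x => cidx (p1 x) (p2 x)).
Proof.
  eapply c_ext. apply c_app2. apply c_add. apply c_app2. apply c_mul. apply c_K. apply c_pairc. apply c_K.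
  intro x. reflexivity.
Qed.
Definition app2 P A B := CComp P (CPair A B).

Definition QP := CComp (CRec (K 2) (app2 CIDX SS (K 3))) (CPair CZero ID).
Lemma c_Q o : cmp o QP Q.
Proof.
  intro x. eapply ev_comp. apply c_pair. apply c_zero. apply c_id.
  eapply ev_eq. apply c_rec. apply c_K. apply c_app2. apply c_cidx. apply c_SS. apply c_K.
  recext (fun (k a : nat) => cidx a 3). induction x; simpl; congruence.
Qed.
Definition CP := CComp (CRec (K 0) (app2 CIDX (K 1) SS)) (CPair CZero ID).
Lemma c_C o : cmp o CP Cn.
Proof.
  intro x. eapply ev_comp. apply c_pair. apply c_zero. apply c_id.
  eapply ev_eq. apply c_rec. apply c_K. apply c_app2. apply c_cidx. apply c_K. apply c_SS.
  recext (fun (k a : nat) => cidx 1 a). induction x; simpl; congruence.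
Qed.
Definition IDXof A B P := app2 CIDX (CComp QP P) (app2 CIDX A (CComp CP B)).
Lemma c_IDX o A B P FA FB FP : cmp o A FA -> cmp o B FB -> cmp o P FP ->
  cmp o (IDXof A B P) (fun x => idx (FA x) (FB x) (FP x)).
Proof.
  intros. eapply c_ext. apply c_app2. apply c_cidx. apply c_comp. apply c_Q. eauto.
  apply c_app2. apply c_cidx. eauto. apply c_comp. apply c_C. eauto.
  intro; reflexivity.
Qed.

Definition Tf k B := nat_rec (fun _ => nat) 1 (fun _ t => pair B t) k.
Definition TP := CRec (K 1) (app2 PAIRC CFst SS).
Lemma c_T o A B FA FB : cmp o A FA -> cmp o B FB -> cmp o (app2 TP B A) (fun x => Tf (FA x) (FB x)).
Proof.
  intros HA HB x. eapply ev_comp. apply c_pair; eauto.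
  eapply ev_eq. apply c_rec. apply c_K. apply c_app2. apply c_pairc. apply c_fst. apply c_SS.
  unfold Tf. recext (fun (k a : nat) => pair (FB x) a). reflexivity.
Qed.

Lemma T_ge k B : 1 <= Tf k B.
Proof. induction k; simpl; auto. pose proof (pair_ge B (Tf k B)). unfold Tf in *. simpl in *. lia. Qed.
Lemma T_monoB k B B' : B <= B' -> Tf k B <= Tf k B'.
Proof. intro. induction k; simpl; auto. apply pair_mono; auto. Qed.
Lemma T_monok k k' B : k <= k' -> Tf k B <= Tf k' B.
Proof. induction 1; auto. simpl. pose proof (pair_ge B (Tf m B)). unfold Tf in *. lia. Qed.
Lemma T_mono k k' B B' : k <= k' -> B <= B' -> Tf k B <= Tf k' B'.
Proof. intros. eapply Nat.le_trans. apply T_monok; eauto. apply T_monoB; auto. Qed.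
Lemma tup_bound l B : (forall a, In a l -> a < B) -> tup l < Tf (length l) B.
Proof.
  induction l; simpl; intros H; auto.
  eapply Nat.lt_le_trans. apply pair_lt1. apply (H a); auto.
  apply pair_mono; auto. apply Nat.lt_le_incl. apply IHl. auto.
Qed.

Fixpoint least (P : nat -> bool) k : nat :=
  match k with 0 => 0 | S k => if P (least P k) then least P k else S k end.
Lemma least_le P k : least P k <= k.
Proof. induction k; simpl; auto. destruct (P (least P k)); lia. Qed.
Lemma least_inv P k : least P k = k \/ P (least P k) = true.
Proof. induction k; simpl; auto. destruct (P (least P k)) eqn:E; auto. Qed.
Lemma least_min P k m : m < least P k -> P m = false.
Proof.
  induction k; simpl; intros H; [lia|].
  destruct (P (least P k)) eqn:E; auto.
  destruct (least_inv P k) as [Hk|Hk]; [|congruence].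
  destruct (Nat.eq_dec m k); [subst; congruence|]. apply IHk. lia.
Qed.
Lemma least_ext P P' k : (forall m, P m = P' m) -> least P k = least P' k.
Proof. intro E. induction k; simpl; auto. rewrite IHk, E. reflexivity. Qed.
Lemma least_spec P k : P k = true -> P (least P k) = true.
Proof. intros H. destruct (least_inv P k) as [->|]; auto. Qed.

Lemma c_mu_least o p F x k : cmp o p F -> F (pair x k) = 0 ->
  eval o (CMu p) x (least (fun m => F (pair x m) =? 0) k).
Proof.
  intros Hp Hk. apply c_mu with (F := F); auto.
  - apply Nat.eqb_eq. apply (least_spec (fun m => F (pair x m) =? 0)). apply Nat.eqb_eq; auto.
  - intros m Hm. apply Nat.eqb_neq. exact (least_min (fun m => F (pair x m) =? 0) k m Hm).
Qed.

Definition ellf (h : nat -> nat) n l := (n - l) * (S (h n) - Tf (S l) (S (S (S l)))).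
Definition ell h n := least (fun l => ellf h n l =? 0) n.
Definition Fd n := idx n n n.
Definition D m := least (fun n => m - Fd n =? 0) m.
Definition gf h m := S (S (ell h (D m))).
Fixpoint buildl (f : nat -> nat) n L m : list nat :=
  match m with 0 => nil | S m => f (idx m n (pred L - m)) :: buildl f n L m end.
Definition jf f h n := tup (buildl f n (ell h n) (ell h n)).

Definition HP eh := strip (decode eh).
Definition LP eh := CMu (app2 MUL (app2 SUB CFst CSnd)
   (app2 SUB (CComp CSucc (CComp (HP eh) CFst))
      (app2 TP (CComp CSucc (CComp CSucc (CComp CSucc CSnd))) (CComp CSucc CSnd)))).
Definition DP := CMu (app2 SUB CFst (IDXof CSnd CSnd CSnd)).
Definition GP eh := CComp CSucc (CComp CSucc (CComp (LP eh) DP)).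
Definition STEP := app2 PAIRC (CComp COrac (IDXof FSd (CComp CFst CFst)
     (app2 SUB (CComp PRED (CComp CSnd CFst)) FSd))) SS.
Definition JP eh := CComp (CRec CZero STEP) (CPair (CPair ID (LP eh)) (LP eh)).

Lemma c_HP o eh h : (forall n, phi eh n (h n)) -> cmp o (HP eh) h.
Proof. intros H n. apply strip_ok. apply H. Qed.

Lemma c_LP o eh h : (forall n, phi eh n (h n)) -> cmp o (LP eh) (ell h).
Proof.
  intros Hh n. unfold ell. unfold LP.
  eapply ev_eq. apply c_mu_least with (F := fun y => ellf h (p1 y) (p2 y)) (k := n).
  - eapply c_ext. apply c_app2. apply c_mul. apply c_app2. apply c_sub. apply c_fst. apply c_snd.
    apply c_app2. apply c_sub. apply c_comp. apply c_succ. apply c_comp. apply (c_HP o eh h Hh). apply c_fst.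
    apply c_T. apply c_comp. apply c_succ. apply c_snd.
    apply c_comp. apply c_succ. apply c_comp. apply c_succ. apply c_comp. apply c_succ. apply c_snd.
    intro; reflexivity.
  - unfold ellf. rewrite p1_pair, p2_pair, Nat.sub_diag. reflexivity.
  - apply least_ext. intro. rewrite p1_pair, p2_pair. reflexivity.
Qed.

Lemma Fd_ge n : n <= Fd n.
Proof. apply idx_ge. Qed.

Lemma c_DP o : cmp o DP D.
Proof.
  intros m. unfold D, DP.
  eapply ev_eq. apply c_mu_least with (F := fun y => p1 y - Fd (p2 y)) (k := m).
  - eapply c_ext. apply c_app2. apply c_sub. apply c_fst. apply c_IDX; apply c_snd.
    intro; reflexivity.
  - cbv beta. rewrite p1_pair, p2_pair. pose proof (Fd_ge m). lia.
  - apply least_ext. intro. rewrite p1_pair, p2_pair. reflexivity.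
Qed.

Lemma c_GP o eh h : (forall n, phi eh n (h n)) -> cmp o (GP eh) (gf h).
Proof.
  intros Hh. unfold GP. eapply c_ext. apply c_comp. apply c_succ. apply c_comp. apply c_succ.
  apply c_comp. apply (c_LP o eh h Hh). apply c_DP. intro; reflexivity.
Qed.

Lemma build_ok f n L m : nat_rec (fun _ => nat) 0 (fun k a => pair (f (idx k n (pred L - k))) a) m
   = tup (buildl f n L m).
Proof. induction m; simpl; congruence. Qed.

Lemma c_JP f eh h : (forall n, phi eh n (h n)) -> cmp f (JP eh) (jf f h).
Proof.
  intros Hh n. unfold JP. eapply ev_comp. apply c_pair. apply c_pair. apply c_id. apply (c_LP f eh h Hh).
  apply (c_LP f eh h Hh).
  eapply ev_eq. apply c_rec. apply c_zero.
  apply c_app2. apply c_pairc. apply c_comp. apply c_orac. apply c_IDX. apply c_FSd.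
  apply c_comp; [apply c_fst|apply c_fst].
  apply c_app2. apply c_sub. apply c_comp. apply c_pred. apply c_comp; [apply c_snd|apply c_fst]. apply c_FSd.
  apply c_SS. unfold jf. cbv beta.
  recext (fun (k a : nat) => pair (f (idx k n (pred (ell h n) - k))) a).
  apply build_ok.
Qed.

Lemma ell_le h n : ell h n <= n.
Proof. apply least_le. Qed.

Lemma ell_P h n : ellf h n (ell h n) = 0.
Proof.
  apply Nat.eqb_eq. unfold ell. apply (least_spec (fun l => ellf h n l =? 0)).
  apply Nat.eqb_eq. unfold ellf. rewrite Nat.sub_diag. reflexivity.
Qed.
Lemma ell_notP h n l : l < ell h n -> ellf h n l <> 0.
Proof. intro H. apply Nat.eqb_neq. exact (least_min (fun l => ellf h n l =? 0) n l H). Qed.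

Lemma ell_bound h n : 2 <= h 0 -> (forall m n, m <= n -> h m <= h n) ->
  Tf (ell h n) (S (S (ell h n))) <= h n.
Proof.
  intros H0 Hm. destruct (ell h n) as [|l] eqn:E.
  - simpl. pose proof (Hm 0 n). lia.
  - assert (l < ell h n) by lia. apply ell_notP in H. unfold ellf in H.
    apply Nat.neq_mul_0 in H. lia.
Qed.

Lemma ell_mono h n n' : (forall m n, m <= n -> h m <= h n) -> n <= n' -> ell h n <= ell h n'.
Proof.
  intros Hm Hn. destruct (Nat.le_gt_cases (ell h n) (ell h n')) as [|Hlt]; auto.
  exfalso. pose proof (ell_P h n') as P. pose proof (ell_notP h n _ Hlt) as NP.
  unfold ellf in *. apply Nat.neq_mul_0 in NP. apply Nat.eq_mul_0 in P.
  pose proof (Hm n n' Hn).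
  pose proof (T_mono (S (ell h n')) (S (ell h n')) (S (S (S (ell h n')))) (S (S (S (ell h n')))) (le_n _) (le_n _)).
  lia.
Qed.

Lemma ell_unb h : (forall m n, m <= n -> h m <= h n) -> (forall b, exists n, b <= h n) ->
  forall L, exists n, L <= ell h n.
Proof.
  intros Hm Hu L. destruct (Hu (Tf L (S (S L)))) as [n0 Hn0].
  exists (Nat.max n0 L).
  destruct (Nat.le_gt_cases L (ell h (Nat.max n0 L))) as [|Hlt]; auto. exfalso.
  pose proof (ell_P h (Nat.max n0 L)) as P. unfold ellf in P. apply Nat.eq_mul_0 in P.
  pose proof (Hm n0 (Nat.max n0 L) (Nat.le_max_l _ _)).
  pose proof (T_mono (S (ell h (Nat.max n0 L))) L (S (S (S (ell h (Nat.max n0 L))))) (S (S L))).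
  lia.
Qed.

Lemma Fd_mono n n' : n <= n' -> Fd n <= Fd n'.
Proof. intros. apply idx_mono; auto. Qed.

Lemma D_P m : m <= Fd (D m).
Proof.
  assert (H : (m - Fd (D m) =? 0) = true).
  { unfold D. apply (least_spec (fun n => m - Fd n =? 0)). apply Nat.eqb_eq. pose proof (Fd_ge m). lia. }
  apply Nat.eqb_eq in H. lia.
Qed.
Lemma D_notP m n : n < D m -> Fd n < m.
Proof.
  intro H. pose proof (least_min (fun n => m - Fd n =? 0) m n H) as E.
  apply Nat.eqb_neq in E. lia.
Qed.
Lemma D_le c n : c <= Fd n -> D c <= n.
Proof.
  intros H. destruct (Nat.le_gt_cases (D c) n) as [|Hlt]; auto.
  apply D_notP in Hlt. lia.
Qed.
Lemma D_mono m m' : m <= m' -> D m <= D m'.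
Proof. intros. apply D_le. pose proof (D_P m'). lia. Qed.
Lemma D_gt n : n < D (S (Fd n)).
Proof.
  destruct (Nat.le_gt_cases (D (S (Fd n))) n) as [Hle|]; auto.
  pose proof (D_P (S (Fd n))). pose proof (Fd_mono _ _ Hle). lia.
Qed.

Lemma in_build f n L m a : In a (buildl f n L m) -> exists k, k < m /\ a = f (idx k n (pred L - k)).
Proof.
  induction m; simpl; [tauto|]. intros [H|H].
  - exists m. split; auto.
  - destruct (IHm H) as [k [Hk ->]]. exists k. split; auto.
Qed.
Lemma length_build f n L m : length (buildl f n L m) = m.
Proof. induction m; simpl; auto. Qed.
Lemma nth_build f n L m p : p < m -> nth p (buildl f n L m) 0 = f (idx (m - 1 - p) n (pred L - (m - 1 - p))).
Proof.
  revert p. induction m; intros p Hp; [lia|]. destruct p; simpl.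
  - rewrite !Nat.sub_0_r. reflexivity.
  - rewrite IHm by lia. f_equal. f_equal; lia.
Qed.

Theorem theorem1 :
  forall h : nat -> nat, order_function h ->
  exists g : nat -> nat, order_function g /\
    forall f : nat -> nat, DNR f -> bounded_by g f ->
      exists j : nat -> nat, turing_reducible j f /\ SNPR j /\ bounded_by h j.
Proof.
  intros h [[eh Hh] [Hm [Hu H0]]].
  exists (gf h). split.
  - split; [|split; [|split]].
    + exists (enc (GP eh)). intro n. unfold phi. rewrite decode_enc. apply (c_GP no_oracle eh h Hh).
    + intros m n Hmn. unfold gf. pose proof (ell_mono h _ _ Hm (D_mono _ _ Hmn)). lia.
    + intro b. destruct (ell_unb h Hm Hu b) as [n0 Hn0]. exists (S (Fd n0)). unfold gf.
      pose proof (ell_mono h _ _ Hm (Nat.lt_le_incl _ _ (D_gt n0))). lia.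
    + unfold gf. lia.
  - intros f Hf Hb. exists (jf f h). split; [|split].
    + exists (JP eh). apply c_JP. exact Hh.
    + intros psi [e He]. destruct (ell_unb h Hm Hu (S e)) as [N HN]. exists N.
      intros n v HNn Hpsi Hj. apply He in Hpsi. rewrite <- Hj in Hpsi. unfold jf in Hpsi.
      set (L := ell h n) in *.
      assert (HL : S e <= L) by (pose proof (ell_mono h _ _ Hm HNn); unfold L; lia).
      assert (Hp : pred L - e < length (buildl f n L L)) by (rewrite length_build; lia).
      pose proof (idx_phi e n _ _ Hpsi Hp) as Hphi.
      rewrite nth_build in Hphi by lia.
      replace (L - 1 - (pred L - e)) with e in Hphi by lia.
      replace (pred L - e) with (pred L - e) in Hphi by reflexivity.
      replace (pred L - (pred L - (pred L - e))) with (pred L - e) in Hphi by lia.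
      exact (Hf _ _ Hphi eq_refl).
    + intro n. unfold jf. set (L := ell h n).
      eapply Nat.lt_le_trans; [| apply (ell_bound h n H0 Hm)]. fold L.
      assert (Hall : forall a, In a (buildl f n L L) -> a < S (S L)).
      { intros a Ha. destruct (in_build _ _ _ _ _ Ha) as [k [Hk ->]].
        eapply Nat.lt_le_trans. apply Hb. unfold gf.
        assert (HLn : L <= n) by apply ell_le.
        assert (D (idx k n (pred L - k)) <= n).
        { apply D_le. unfold Fd. apply idx_mono; lia. }
        pose proof (ell_mono h _ _ Hm H). fold L in H1. lia. }
      pose proof (tup_bound _ _ Hall) as HT. rewrite length_build in HT. exact HT.
Qed.
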